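(* Let $X$ be a real Banach space, $\varepsilon>0$, $A\subseteq X$ bounded, nonempty and non-$\varepsilon$-dentable, and $C=\overline{\operatorname{co}}(A)$. Let $S_0$ be a slice of $C$, $D\subseteq C$ with $\alpha(D)<\varepsilon$, and $\gamma\in(0,1)$. Let $\mathcal S(S_0,D)$ be the collection of all slices $S$ of $C$ with $S\subseteq S_0\setminus D$, and let $\Lambda=\Lambda(S_0,D,\gamma)$ be the union of all $\gamma$-shallow parallels $S^\gamma$ of slices $S\in\mathcal S(S_0,D)$. Then $$C=\overline{\operatorname{co}}\big((C\setminus S_0)\cup(\Lambda\cap A)\big).$$
   Context: $\overline{\operatorname{co}}$ is the norm-closed convex hull. The Kuratowski measure of noncompactness $\alpha(E)$ is the infimum of all $\varepsilon>0$ such that $E$ can be covered by finitely many sets of diameter at most $\varepsilon$. For bounded nonempty $E\subseteq X$, $f$ in the closed unit ball of $X^*$ and $\delta>0$, the slice $S(f,E,\delta)=\{e\in E: f(e)>\sup f(E)-\delta\}$; a slice of $E$ is any set of this form. A bounded set is non-$\varepsilon$-dentable if every slice has diameter $>\varepsilon$. For $\gamma\in(0,1)$ and a slice $S=S(f,C,\delta)$ of $C$ (taken with a defining pair $(f,\delta)$; all such representations are included), its $\gamma$-shallow parallel is $S^\gamma=S(f,C,\gamma\delta/2)$. *)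

(* Defs.v *)
From Stdlib Require Import Reals.
Open Scope R_scope.

Record BanachSpace := {
  carrier :> Type;
  vzero : carrier;
  vadd : carrier -> carrier -> carrier;
  vopp : carrier -> carrier;
  vscal : R -> carrier -> carrier;
  vnorm : carrier -> R;
  vadd_assoc : forall x y z, vadd x (vadd y z) = vadd (vadd x y) z;
  vadd_comm : forall x y, vadd x y = vadd y x;
  vadd_0 : forall x, vadd vzero x = x;
  vadd_opp : forall x, vadd x (vopp x) = vzero;
  vscal_addr : forall a x y, vscal a (vadd x y) = vadd (vscal a x) (vscal a y);
  vscal_addl : forall a b x, vscal (a + b) x = vadd (vscal a x) (vscal b x);
  vscal_assoc : forall a b x, vscal a (vscal b x) = vscal (a * b) x;
  vscal_1 : forall x, vscal 1 x = x;
  vnorm_eq0 : forall x, vnorm x = 0 -> x = vzero;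
  vnorm_scal : forall a x, vnorm (vscal a x) = Rabs a * vnorm x;
  vnorm_triangle : forall x y, vnorm (vadd x y) <= vnorm x + vnorm y;
  vcomplete : forall u : nat -> carrier,
    (forall eps, 0 < eps -> exists N, forall n m, (N <= n)%nat -> (N <= m)%nat ->
        vnorm (vadd (u n) (vopp (u m))) < eps) ->
    exists l, forall eps, 0 < eps -> exists N, forall n, (N <= n)%nat ->
        vnorm (vadd (u n) (vopp l)) < eps
}.

Arguments vzero {_}. Arguments vadd {_} _ _. Arguments vopp {_} _.
Arguments vscal {_} _ _. Arguments vnorm {_} _.

Section Defs.
Variable X : BanachSpace.

Definition vsub (x y : X) : X := vadd x (vopp y).

(** f belongs to the closed unit ball of X^*: linear, with |f x| <= ||x||
    (which implies continuity and ||f|| <= 1). *)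
Definition in_dual_ball (f : X -> R) : Prop :=
  (forall x y, f (vadd x y) = f x + f y) /\
  (forall a x, f (vscal a x) = a * f x) /\
  (forall x, Rabs (f x) <= vnorm x).

Definition bounded_set (E : X -> Prop) : Prop :=
  exists M, forall x, E x -> vnorm x <= M.

Definition nonempty_set (E : X -> Prop) : Prop := exists x, E x.

Definition diam_le (E : X -> Prop) (e : R) : Prop :=
  forall x y, E x -> E y -> vnorm (vsub x y) <= e.

Fixpoint rsum (n : nat) (l : nat -> R) : R :=
  match n with O => 0 | S k => rsum k l + l k end.
Fixpoint vsum (n : nat) (l : nat -> R) (p : nat -> X) : X :=
  match n with O => vzero | S k => vadd (vsum k l p) (vscal (l k) (p k)) end.

Definition conv (E : X -> Prop) (x : X) : Prop :=
  exists n (l : nat -> R) (p : nat -> X),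
    (forall i, (i < n)%nat -> 0 <= l i /\ E (p i)) /\
    rsum n l = 1 /\ x = vsum n l p.

Definition norm_closure (E : X -> Prop) (x : X) : Prop :=
  forall eps, 0 < eps -> exists y, E y /\ vnorm (vsub x y) < eps.

Definition cch (E : X -> Prop) : X -> Prop := norm_closure (conv E).

Definition slice (f : X -> R) (E : X -> Prop) (delta : R) (x : X) : Prop :=
  E x /\ exists s, is_lub (fun r => exists e, E e /\ r = f e) s /\ f x > s - delta.

Definition is_slice_of (E S : X -> Prop) : Prop :=
  exists f delta, in_dual_ball f /\ 0 < delta /\
    forall x, S x <-> slice f E delta x.

Definition non_dentable (eps : R) (E : X -> Prop) : Prop :=
  forall f delta, in_dual_ball f -> 0 < delta -> ~ diam_le (slice f E delta) eps.

Definition finite_cover_diam (E : X -> Prop) (e : R) : Prop :=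
  exists n (B : nat -> X -> Prop),
    (forall i, (i < n)%nat -> diam_le (B i) e) /\
    (forall x, E x -> exists i, (i < n)%nat /\ B i x).

Definition is_kuratowski (E : X -> Prop) (a : R) : Prop :=
  (forall e, 0 < e -> finite_cover_diam E e -> a <= e) /\
  (forall b, (forall e, 0 < e -> finite_cover_diam E e -> b <= e) -> b <= a).

(** Lambda(S0,D,gamma): union of gamma-shallow parallels S(f,C,gamma*delta/2)
    over all representations S(f,C,delta) of slices of C contained in S0 \ D *)
Definition Lambda (C S0 D : X -> Prop) (gamma : R) (x : X) : Prop :=
  exists f delta, in_dual_ball f /\ 0 < delta /\
    (forall y, slice f C delta y -> S0 y /\ ~ D y) /\
    slice f C (gamma * delta / 2) x.

End Defs.

Arguments vsub {_} _ _.
Arguments in_dual_ball {_} _. Arguments bounded_set {_} _. Arguments nonempty_set {_} _.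
Arguments diam_le {_} _ _. Arguments vsum {_} _ _ _.
Arguments conv {_} _ _. Arguments norm_closure {_} _ _. Arguments cch {_} _ _.
Arguments slice {_} _ _ _ _. Arguments is_slice_of {_} _ _.
Arguments non_dentable {_} _ _. Arguments finite_cover_diam {_} _ _.
Arguments is_kuratowski {_} _ _. Arguments Lambda {_} _ _ _ _ _.

(* Main.v *)
Require Import Defs.
From Stdlib Require Import Reals Lra Lia List Classical ClassicalEpsilon.
From mathcomp Require classical_sets.
Open Scope R_scope.

Arguments vadd_assoc {_} _ _ _. Arguments vadd_comm {_} _ _. Arguments vadd_0 {_} _.
Arguments vadd_opp {_} _. Arguments vscal_addr {_} _ _ _. Arguments vscal_addl {_} _ _ _.
Arguments vscal_assoc {_} _ _ _. Arguments vscal_1 {_} _. Arguments vnorm_eq0 {_} _ _.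
Arguments vnorm_scal {_} _ _. Arguments vnorm_triangle {_} _ _.

Section Vec.
Variable X : BanachSpace.

Lemma vadd_0r (x : X) : vadd x vzero = x.
Proof. rewrite vadd_comm. apply vadd_0. Qed.

Lemma vadd_cancel (x y z : X) : vadd x y = vadd x z -> y = z.
Proof.
  intro H. assert (vadd (vopp x) (vadd x y) = vadd (vopp x) (vadd x z)) by now rewrite H.
  rewrite !vadd_assoc, (vadd_comm (vopp x) x), vadd_opp, !vadd_0 in H0. exact H0.
Qed.

Lemma vscal_0 (x : X) : vscal 0 x = vzero.
Proof.
  apply (vadd_cancel (vscal 0 x)). rewrite vadd_0r. rewrite <- vscal_addl. now rewrite Rplus_0_l.
Qed.

Lemma vopp_scal (x : X) : vopp x = vscal (-1) x.
Proof.
  apply (vadd_cancel x). rewrite vadd_opp. rewrite <- (vscal_1 x) at 1.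
  rewrite <- vscal_addl. replace (1 + -1) with 0 by ring. now rewrite vscal_0.
Qed.

Inductive vexp : Type :=
| VAt (i : nat) | VZ | VA (a b : vexp) | VO (a : vexp) | VS (r : R) (a : vexp).

Fixpoint veval (env : list X) (e : vexp) : X :=
  match e with
  | VAt i => nth i env vzero
  | VZ => vzero
  | VA a b => vadd (veval env a) (veval env b)
  | VO a => vopp (veval env a)
  | VS r a => vscal r (veval env a)
  end.

Fixpoint vcoef (e : vexp) (i : nat) : R :=
  match e with
  | VAt j => if Nat.eqb i j then 1 else 0
  | VZ => 0
  | VA a b => vcoef a i + vcoef b i
  | VO a => - vcoef a i
  | VS r a => r * vcoef a i
  end.

Fixpoint vwf (n : nat) (e : vexp) : bool :=
  match e with
  | VAt j => Nat.ltb j n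
  | VZ => true
  | VA a b => andb (vwf n a) (vwf n b)
  | VO a => vwf n a
  | VS r a => vwf n a
  end.

Fixpoint linc (env : list X) (c : nat -> R) : X :=
  match env with
  | nil => vzero
  | v :: env' => vadd (vscal (c O) v) (linc env' (fun i => c (S i)))
  end.

Lemma linc_add env : forall c d, linc env (fun i => c i + d i) = vadd (linc env c) (linc env d).
Proof.
  induction env as [|v env IH]; intros c d; simpl.
  - now rewrite vadd_0.
  - rewrite IH, vscal_addl.
    rewrite <- !vadd_assoc. f_equal. rewrite !vadd_assoc. f_equal. apply vadd_comm.
Qed.

Lemma linc_scal env : forall r c, linc env (fun i => r * c i) = vscal r (linc env c).
Proof.
  induction env as [|v env IH]; intros r c; simpl.
  - rewrite <- (vscal_0 vzero), vscal_assoc. now rewrite Rmult_0_r.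
  - rewrite IH, vscal_addr, vscal_assoc. reflexivity.
Qed.

Lemma linc_zero env : linc env (fun _ => 0) = vzero.
Proof.
  induction env as [|v env IH]; simpl; auto. rewrite IH, vscal_0, vadd_0. auto.
Qed.

Lemma linc_ext env : forall c d, (forall i, (i < length env)%nat -> c i = d i) -> linc env c = linc env d.
Proof.
  induction env as [|v env IH]; intros c d H; simpl; auto.
  rewrite (H O) by (simpl; lia). f_equal. apply IH. intros i Hi. apply H. simpl; lia.
Qed.

Lemma linc_at env : forall j, (j < length env)%nat ->
  linc env (fun i => if Nat.eqb i j then 1 else 0) = nth j env vzero.
Proof.
  induction env as [|v env IH]; intros j Hj; simpl in *. lia.
  destruct j as [|j].
  - simpl. rewrite vscal_1. rewrite linc_zero, vadd_0r; auto.
  - simpl. rewrite vscal_0, vadd_0. apply IH. lia.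
Qed.

Lemma veval_linc env e : vwf (length env) e = true -> veval env e = linc env (vcoef e).
Proof.
  induction e; simpl; intro H.
  - symmetry. apply linc_at. now apply Nat.ltb_lt.
  - symmetry. apply linc_zero.
  - apply andb_prop in H. destruct H. rewrite IHe1, IHe2 by auto. symmetry. apply (linc_add env (vcoef e1) (vcoef e2)).
  - rewrite IHe by auto. rewrite vopp_scal. rewrite <- linc_scal. apply linc_ext. intros; ring.
  - rewrite IHe by auto. rewrite <- linc_scal. reflexivity.
Qed.

Lemma veval_eq env e1 e2 : vwf (length env) e1 = true -> vwf (length env) e2 = true ->
  (forall i, (i < length env)%nat -> vcoef e1 i = vcoef e2 i) -> veval env e1 = veval env e2.
Proof.
  intros H1 H2 H. rewrite !veval_linc by auto. now apply linc_ext.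
Qed.

End Vec.



Ltac vidx x l := lazymatch l with
  | x :: _ => constr:(O)
  | _ :: ?l' => let n := vidx x l' in constr:(S n) end.

Ltac vatoms t l := lazymatch t with
  | @vadd _ ?a ?b => let l1 := vatoms a l in vatoms b l1
  | @vopp _ ?a => vatoms a l
  | @vscal _ _ ?a => vatoms a l
  | @vzero _ => l
  | _ => match l with
         | _ => let _ := vidx t l in l
         | _ => constr:(t :: l) end
  end.

Ltac vreify t l := lazymatch t with
  | @vadd _ ?a ?b => let ra := vreify a l in let rb := vreify b l in constr:(VA ra rb)
  | @vopp _ ?a => let ra := vreify a l in constr:(VO ra)
  | @vscal _ ?r ?a => let ra := vreify a l in constr:(VS r ra)
  | @vzero _ => constr:(VZ)
  | _ => let n := vidx t l in constr:(VAt n)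
  end.

Ltac vring_core :=
  lazymatch goal with |- @eq (carrier ?X) ?a ?b =>
    let l0 := constr:(@nil (carrier X)) in
    let l1 := vatoms a l0 in let l := vatoms b l1 in
    let ea := vreify a l in let eb := vreify b l in
    change (veval X l ea = veval X l eb); apply veval_eq;
    [reflexivity | reflexivity |
     let i := fresh "i" in let Hi := fresh "Hi" in intros i Hi; simpl in Hi;
     repeat (first [exfalso; lia | destruct i as [|i]; [simpl; try ring | ]])]
  end.

Ltac vring := unfold vsub in *; vring_core.




Section Norm.
Variable X : BanachSpace.
Implicit Types x y z : X.

Lemma vnorm_zero : vnorm (@vzero X) = 0.
Proof.
  replace (@vzero X) with (vscal 0 (@vzero X)) by vring.
  rewrite vnorm_scal, Rabs_R0. ring.
Qed.

Lemma vnorm_opp x : vnorm (vopp x) = vnorm x.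
Proof.
  replace (vopp x) with (vscal (-1) x) by vring.
  rewrite vnorm_scal. rewrite Rabs_left by lra. ring.
Qed.

Lemma vnorm_ge0 x : 0 <= vnorm x.
Proof.
  pose proof (vnorm_triangle x (vopp x)). rewrite vadd_opp, vnorm_zero, vnorm_opp in H. lra.
Qed.

Lemma vnorm_sym x y : vnorm (vsub x y) = vnorm (vsub y x).
Proof.
  replace (vsub x y) with (vopp (vsub y x)) by vring. apply vnorm_opp.
Qed.

Lemma vnorm_tri3 x y z : vnorm (vsub x z) <= vnorm (vsub x y) + vnorm (vsub y z).
Proof.
  replace (vsub x z) with (vadd (vsub x y) (vsub y z)) by vring. apply vnorm_triangle.
Qed.

Lemma vnorm_rev x y : vnorm x - vnorm y <= vnorm (vsub x y).
Proof.
  pose proof (vnorm_triangle (vsub x y) y).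
  replace (vadd (vsub x y) y) with x in H by vring. lra.
Qed.

Lemma vnorm_sub0 x : vnorm (vsub x vzero) = vnorm x.
Proof. f_equal. vring. Qed.

Lemma rsum_ext n a b : (forall i, (i < n)%nat -> a i = b i) -> rsum n a = rsum n b.
Proof. induction n; simpl; intros; auto. rewrite IHn, H; auto. Qed.

Lemma rsum_le n a b : (forall i, (i < n)%nat -> a i <= b i) -> rsum n a <= rsum n b.
Proof. induction n; simpl; intros. lra. specialize (IHn (fun i Hi => H i ltac:(lia))). specialize (H n ltac:(lia)). lra. Qed.

Lemma rsum_plus n a b : rsum n (fun i => a i + b i) = rsum n a + rsum n b.
Proof. induction n; simpl; intros. ring. rewrite IHn. ring. Qed.

Lemma rsum_scal n r a : rsum n (fun i => r * a i) = r * rsum n a.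
Proof. induction n; simpl; intros. ring. rewrite IHn. ring. Qed.

Lemma rsum_const n r a : rsum n (fun i => a i * r) = rsum n a * r.
Proof. induction n; simpl; intros. ring. rewrite IHn. ring. Qed.

Definition linear_f (f : X -> R) :=
  (forall x y, f (vadd x y) = f x + f y) /\ (forall a x, f (vscal a x) = a * f x).

Lemma dual_linear f : in_dual_ball f -> linear_f f.
Proof. intros [H1 [H2 _]]. split; auto. Qed.

Lemma lin_zero f : linear_f f -> f vzero = 0.
Proof. intros [H1 H2]. replace (@vzero X) with (vscal 0 (@vzero X)) by vring. rewrite H2. ring. Qed.

Lemma lin_sub f x y : linear_f f -> f (vsub x y) = f x - f y.
Proof.
  intros [H1 H2]. replace (vsub x y) with (vadd x (vscal (-1) y)) by vring.
  rewrite H1, H2. ring.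
Qed.

Lemma dual_sub f x y : in_dual_ball f -> Rabs (f x - f y) <= vnorm (vsub x y).
Proof.
  intro H. rewrite <- lin_sub by (apply dual_linear; auto). apply H.
Qed.

Lemma dual_le f x y : in_dual_ball f -> f x <= f y + vnorm (vsub x y).
Proof. intro H. pose proof (dual_sub f x y H). pose proof (Rle_abs (f x - f y)). lra. Qed.

Lemma vsum_lin f n l (p : nat -> X) : linear_f f -> f (vsum n l p) = rsum n (fun i => l i * f (p i)).
Proof.
  intro H. induction n; simpl. apply lin_zero; auto.
  destruct H as [H1 H2]. rewrite H1, H2, IHn. ring.
Qed.

Lemma vsum_sub n l (p : nat -> X) y : vsum n l (fun i => vsub y (p i)) = vsub (vscal (rsum n l) y) (vsum n l p).
Proof.
  induction n; simpl. vring. rewrite IHn. vring.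
Qed.

Lemma vsum_norm n l (q : nat -> X) : (forall i, (i < n)%nat -> 0 <= l i) ->
  vnorm (vsum n l q) <= rsum n (fun i => l i * vnorm (q i)).
Proof.
  induction n; simpl; intros H. rewrite vnorm_zero; lra.
  eapply Rle_trans. apply vnorm_triangle. rewrite vnorm_scal, Rabs_pos_eq by (apply H; lia).
  specialize (IHn (fun i Hi => H i ltac:(lia))). lra.
Qed.

Definition cvx n (l : nat -> R) := (forall i, (i < n)%nat -> 0 <= l i) /\ rsum n l = 1.

Lemma conv_dist n l (p : nat -> X) y : cvx n l ->
  vnorm (vsub y (vsum n l p)) <= rsum n (fun i => l i * vnorm (vsub y (p i))).
Proof.
  intros [H1 H2].
  replace (vsub y (vsum n l p)) with (vsum n l (fun i => vsub y (p i))).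
  apply vsum_norm; auto. rewrite vsum_sub, H2. vring.
Qed.

Lemma affine_bound n l (p : nat -> X) y g a b : cvx n l -> linear_f g ->
  (forall i, (i < n)%nat -> vnorm (vsub y (p i)) <= a + b * g (p i)) ->
  vnorm (vsub y (vsum n l p)) <= a + b * g (vsum n l p).
Proof.
  intros Hc Hg H. eapply Rle_trans. apply conv_dist; auto.
  rewrite vsum_lin by auto. destruct Hc as [Hc1 Hc2].
  eapply Rle_trans. apply rsum_le with (b := fun i => l i * a + b * (l i * g (p i))).
  intros i Hi. specialize (H i Hi). specialize (Hc1 i Hi). nra.
  rewrite rsum_plus, rsum_const, rsum_scal, Hc2. lra.
Qed.

End Norm.


Section HB.
Variable X : BanachSpace.
Variable Q : X -> R -> Prop.
Hypothesis Qadd : forall u v u' v', Q u v -> Q u' v' -> Q (vadd u u') (v + v').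
Hypothesis Qscal : forall u v t, 0 < t -> Q u v -> Q (vscal t u) (t * v).
Hypothesis Qex : forall u, exists v, Q u v.
Hypothesis Q00 : Q vzero 0.

Definition gvalid (G : X -> R -> Prop) :=
  (forall x a y b, G x a -> G y b -> G (vadd x y) (a + b)) /\
  (forall t x a, G x a -> G (vscal t x) (t * a)) /\
  (forall x a v, G x a -> Q x v -> a <= v).

Lemma gvalid_ext G G' : (forall x a, G x a <-> G' x a) -> gvalid G -> gvalid G'.
Proof.
  intros E [H1 [H2 H3]]. split; [|split].
  - intros x a y b A B. apply E. apply H1; apply E; auto.
  - intros t x a A. apply E. apply H2; apply E; auto.
  - intros x a v A. apply H3. apply E; auto.
Qed.

Lemma gvalid_fun G x a b : gvalid G -> G x a -> G x b -> a = b.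
Proof.
  intros [H1 [H2 H3]] A B.
  assert (forall a b, G x a -> G x b -> a - b <= 0).
  { intros a0 b0 A0 B0. pose proof (H1 _ _ _ _ A0 (H2 (-1) _ _ B0)).
    replace (vadd x (vscal (-1) x)) with (@vzero X) in H by vring.
    pose proof (H3 _ _ _ H Q00). lra. }
  pose proof (H _ _ A B). pose proof (H _ _ B A). lra.
Qed.

Lemma gvalid_0 G x a : gvalid G -> G x a -> G vzero 0.
Proof.
  intros [H1 [H2 H3]] A. pose proof (H2 0 _ _ A).
  replace (vscal 0 x) with (@vzero X) in H by vring. now rewrite Rmult_0_l in H.
Qed.

Definition gext (G : X -> R -> Prop) (z : X) (r : R) (x : X) (a : R) :=
  exists y b t, G y b /\ x = vadd y (vscal t z) /\ a = b + t * r.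

Lemma gext_step G z : gvalid G -> G vzero 0 -> exists r, gvalid (gext G z r).
Proof.
  intros HG H0. pose proof HG as [H1 [H2 H3]].
  assert (Key : forall y b y' b' v v', G y b -> G y' b' -> Q (vsub y z) v -> Q (vadd y' z) v' ->
             b - v <= v' - b').
  { intros y b y' b' v v' A A' B B'. pose proof (Qadd _ _ _ _ B B').
    replace (vadd (vsub y z) (vadd y' z)) with (vadd y y') in H by vring.
    pose proof (H3 _ _ _ (H1 _ _ _ _ A A') H). lra. }
  set (L := fun w => exists y b v, G y b /\ Q (vsub y z) v /\ w = b - v).
  destruct (Qex z) as [v0 Hv0]. destruct (Qex (vsub vzero z)) as [v1 Hv1].
  assert (Lb : bound L).
  { exists (v0 - 0). intros w [y [b [v [A [B ->]]]]]. apply (Key y b vzero 0 v v0); auto.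
    replace (vadd vzero z) with z by vring. auto. }
  assert (Le : exists w, L w) by (exists (0 - v1); exists vzero, 0, v1; auto).
  destruct (completeness L Lb Le) as [r [Hr1 Hr2]].
  assert (R1 : forall y b v, G y b -> Q (vsub y z) v -> b - v <= r).
  { intros y b v A B. apply Hr1. exists y, b, v; auto. }
  assert (R2 : forall y b v, G y b -> Q (vadd y z) v -> r <= v - b).
  { intros y b v A B. apply Hr2. intros w [y' [b' [v' [A' [B' ->]]]]]. eapply Key; eauto. }
  exists r. split; [|split].
  - intros x a y b [y1 [b1 [t1 [A1 [-> ->]]]]] [y2 [b2 [t2 [A2 [-> ->]]]]].
    exists (vadd y1 y2), (b1 + b2), (t1 + t2). split; auto. split. vring. ring.
  - intros s x a [y [b [t [A [-> ->]]]]]. exists (vscal s y), (s * b), (s * t).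
    split; auto. split. vring. ring.
  - intros x a v [y [b [t [A [-> ->]]]]] HQ.
    destruct (Rtotal_order t 0) as [Ht | [Ht | Ht]].
    + set (s := - t). assert (Hs : 0 < s) by (unfold s; lra).
      pose proof (Qscal _ _ (/ s) ltac:(apply Rinv_0_lt_compat; auto) HQ).
      replace (vscal (/ s) (vadd y (vscal t z))) with (vsub (vscal (/ s) y) z) in H
        by (vring; unfold s; field; lra).
      pose proof (R1 _ _ _ (H2 (/ s) _ _ A) H).
      assert (b - v <= s * r).
      { replace (b - v) with (s * (/ s * b - / s * v)) by (field; lra).
        apply Rmult_le_compat_l; lra. }
      unfold s in H5. lra.
    + subst t. replace (vadd y (vscal 0 z)) with y in HQ by vring.
      pose proof (H3 _ _ _ A HQ). lra.
    + pose proof (Qscal _ _ (/ t) ltac:(apply Rinv_0_lt_compat; auto) HQ).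
      replace (vscal (/ t) (vadd y (vscal t z))) with (vadd (vscal (/ t) y) z) in H
        by (vring; field; lra).
      pose proof (R2 _ _ _ (H2 (/ t) _ _ A) H).
      assert (t * r <= v - b).
      { replace (v - b) with (t * (/ t * v - / t * b)) by (field; lra).
        apply Rmult_le_compat_l; lra. }
      lra.
Qed.

Lemma gext_incl G z r x a : G x a -> gext G z r x a.
Proof. intros A. exists x, a, 0. split; auto. split. vring. ring. Qed.

Lemma gext_new G z r : G vzero 0 -> gext G z r z r.
Proof. intros A. exists vzero, 0, 1. split; auto. split. vring. ring. Qed.

Theorem hahn_banach (G0 : X -> R -> Prop) : gvalid G0 -> G0 vzero 0 ->
  exists f, linear_f X f /\ (forall u v, Q u v -> f u <= v) /\ (forall x a, G0 x a -> f x = a).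
Proof.
  intros HG0 G00.
  set (P := fun (S : classical_sets.set (carrier X * R)%type) => gvalid (fun x a => S (x, a) \/ G0 x a)).
  destruct (@classical_sets.Zorn_bigcup _ P) as [A [PA Amax]].
  { intros F FP Ftot. unfold P.
    set (U := classical_sets.bigcup F (fun S => S)).
    assert (HU : forall x a, U (x, a) <-> exists S, F S /\ S (x, a)).
    { intros x a. split. intros [S HS HS']. exists S; auto. intros [S [HS HS']]. exists S; auto. }
    assert (Com : forall x a y b, (U (x,a) \/ G0 x a) -> (U (y,b) \/ G0 y b) ->
       (G0 x a /\ G0 y b) \/ exists S, F S /\ (S (x,a) \/ G0 x a) /\ (S (y,b) \/ G0 y b)).
    { intros x a y b [Ha | Ha] [Hb | Hb]; try (left; auto; fail).
      - apply HU in Ha. apply HU in Hb. destruct Ha as [S1 [F1 S1a]]. destruct Hb as [S2 [F2 S2b]].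
        right. destruct (Ftot S1 S2 F1 F2) as [I | I].
        + exists S2. split; auto.
        + exists S1. split; auto.
      - apply HU in Ha. destruct Ha as [S1 [F1 S1a]]. right. exists S1; auto.
      - apply HU in Hb. destruct Hb as [S1 [F1 S1b]]. right. exists S1; auto. }
    assert (Lift : forall S x a, F S -> (S (x,a) \/ G0 x a) -> U (x,a) \/ G0 x a).
    { intros S x a FS [H|H]; [left; apply HU; exists S; auto | right; auto]. }
    destruct HG0 as [G1 [G2 G3]].
    split; [|split].
    - intros x a y b Ha Hb. destruct (Com _ _ _ _ Ha Hb) as [[A1 A2] | [S [FS [A1 A2]]]].
      + right. auto.
      + apply (Lift S); auto. destruct (FP S FS) as [K1 _]. apply K1; auto.
    - intros t x a [Ha | Ha].
      + apply HU in Ha. destruct Ha as [S [FS Sa]]. apply (Lift S); auto.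
        destruct (FP S FS) as [_ [K2 _]]. apply K2; auto.
      + right; auto.
    - intros x a v [Ha | Ha] HQ.
      + apply HU in Ha. destruct Ha as [S [FS Sa]]. destruct (FP S FS) as [_ [_ K3]]. eapply K3; eauto.
      + eapply G3; eauto. }
  set (H := fun x a => A (x, a) \/ G0 x a).
  assert (Tot : forall x, exists a, H x a).
  { intro z. apply NNPP. intro Hn.
    assert (H00 : H vzero 0) by (right; auto).
    destruct (gext_step H z PA H00) as [r Hr].
    apply (Amax (fun p => gext H z r (fst p) (snd p))).
    - split.
      + intros [x a] Ha. simpl. apply gext_incl. left; auto.
      + intro Inc. apply Hn. exists r. left. apply (Inc (z, r)). simpl. apply gext_new. auto.
    - unfold P. eapply gvalid_ext; [|exact Hr]. intros x a; simpl. split; [auto|].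
      intros [K|K]; auto. apply gext_incl. right; auto. }
  set (f := fun x => proj1_sig (constructive_indefinite_description _ (Tot x))).
  assert (Hf : forall x, H x (f x)) by (intro x; unfold f; apply proj2_sig).
  pose proof PA as [K1 [K2 K3]]. fold H in K1, K2, K3.
  exists f. split; [split|split].
  - intros x y. apply (gvalid_fun H (vadd x y)); [exact PA | apply Hf | apply K1; apply Hf].
  - intros t x. apply (gvalid_fun H (vscal t x)); [exact PA | apply Hf | apply K2; apply Hf].
  - intros u v HQ. eapply K3; [apply Hf | exact HQ].
  - intros x a Ha. apply (gvalid_fun H x); [exact PA | apply Hf | right; auto].
Qed.

End HB.


Lemma rdiv_ge0 a b : 0 <= a -> 0 < b -> 0 <= a / b.
Proof. intros. unfold Rdiv. apply Rmult_le_pos; auto. left. apply Rinv_0_lt_compat; auto. Qed.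

Section Sep.
Variable X : BanachSpace.

Definition convex_set (K : X -> Prop) :=
  forall k1 k2 t, K k1 -> K k2 -> 0 <= t <= 1 -> K (vadd (vscal t k1) (vscal (1 - t) k2)).

Theorem separation (K : X -> Prop) (x : X) (R0 d : R) :
  convex_set K -> (forall k, K k -> vnorm k <= R0) ->
  0 < d -> (forall k, K k -> d <= vnorm (vsub x k)) ->
  exists f c, in_dual_ball f /\ (forall k, K k -> f k <= c) /\ c < f x.
Proof.
  intros Kc KR Hd Kd.
  destruct (classic (exists k0, K k0)) as [[k0 Hk0] | Hne].
  2:{ exists (fun _ => 0), (-1). split; [|split].
      - split; [|split]; intros; try ring. rewrite Rabs_R0. apply vnorm_ge0.
      - intros k Hk. exfalso. apply Hne. eauto.
      - lra. }
  set (r := d / 2). assert (Hr : 0 < r) by (unfold r; lra).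
  set (R1 := R0 + 1).
  assert (HR1 : 1 <= R1) by (pose proof (KR k0 Hk0); pose proof (vnorm_ge0 X k0); unfold R1; lra).
  set (q := fun u lam k => lam + vnorm (vsub u (vscal lam (vsub k k0))) / r).
  set (Q := fun u v => exists lam k, 0 <= lam /\ K k /\ q u lam k <= v).
  assert (q0' : forall u k, q u 0 k = vnorm u / r).
  { intros u k. unfold q. replace (vsub u (vscal 0 (vsub k k0))) with u by vring. ring. }
  assert (q0 : forall u, q u 0 k0 = vnorm u / r) by (intro; apply q0').
  assert (qge : forall u lam k, 0 <= lam -> 0 <= q u lam k).
  { intros. unfold q. pose proof (vnorm_ge0 X (vsub u (vscal lam (vsub k k0)))).
    assert (0 <= vnorm (vsub u (vscal lam (vsub k k0))) / r) by (apply rdiv_ge0; lra). lra. }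
  assert (Qge : forall u v, Q u v -> 0 <= v).
  { intros u v [lam [k [H1 [H2 H3]]]]. pose proof (qge u lam k H1). lra. }
  assert (Qadd : forall u v u' v', Q u v -> Q u' v' -> Q (vadd u u') (v + v')).
  { intros u v u' v' [l1 [k1 [L1 [K1 Q1]]]] [l2 [k2 [L2 [K2 Q2]]]].
    destruct (Req_dec (l1 + l2) 0) as [E | E].
    - assert (l1 = 0) by lra. assert (l2 = 0) by lra. subst l1 l2.
      exists 0, k0. split; [lra|split; auto]. rewrite q0.
      rewrite q0' in Q1, Q2. pose proof (vnorm_triangle u u').
      assert (vnorm (vadd u u') / r <= vnorm u / r + vnorm u' / r).
      { unfold Rdiv. rewrite <- Rmult_plus_distr_r. apply Rmult_le_compat_r; [|lra].
        left. apply Rinv_0_lt_compat; auto. }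
      lra.
    - set (t := l1 / (l1 + l2)).
      assert (Ht : 0 <= t <= 1).
      { unfold t. split. apply rdiv_ge0; lra.
        apply (Rmult_le_reg_r (l1 + l2)); [lra|]. unfold Rdiv. rewrite Rmult_assoc, Rinv_l by lra. lra. }
      exists (l1 + l2), (vadd (vscal t k1) (vscal (1 - t) k2)). split; [lra|split; auto].
      unfold q in *.
      replace (vsub (vadd u u') (vscal (l1 + l2) (vsub (vadd (vscal t k1) (vscal (1 - t) k2)) k0)))
        with (vadd (vsub u (vscal l1 (vsub k1 k0))) (vsub u' (vscal l2 (vsub k2 k0))))
        by (vring; unfold t; field; lra).
      pose proof (vnorm_triangle (vsub u (vscal l1 (vsub k1 k0))) (vsub u' (vscal l2 (vsub k2 k0)))).
      set (A1 := vnorm (vadd (vsub u (vscal l1 (vsub k1 k0))) (vsub u' (vscal l2 (vsub k2 k0))))) in *.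
      set (B1 := vnorm (vsub u (vscal l1 (vsub k1 k0)))) in *.
      set (B2 := vnorm (vsub u' (vscal l2 (vsub k2 k0)))) in *.
      assert (A1 / r <= B1 / r + B2 / r).
      { unfold Rdiv. rewrite <- Rmult_plus_distr_r. apply Rmult_le_compat_r; [|lra].
        left. apply Rinv_0_lt_compat; auto. }
      lra. }
  assert (Qscal : forall u v t, 0 < t -> Q u v -> Q (vscal t u) (t * v)).
  { intros u v t Ht [lam [k [L1 [K1 Q1]]]]. exists (t * lam), k. split; [nra|split; auto].
    unfold q in *. replace (vsub (vscal t u) (vscal (t * lam) (vsub k k0)))
      with (vscal t (vsub u (vscal lam (vsub k k0)))) by vring.
    rewrite vnorm_scal, Rabs_pos_eq by lra.
    replace (t * lam + t * vnorm (vsub u (vscal lam (vsub k k0))) / r)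
      with (t * (lam + vnorm (vsub u (vscal lam (vsub k k0))) / r)) by (field; lra).
    apply Rmult_le_compat_l; lra. }
  assert (Qex : forall u, exists v, Q u v).
  { intro u. exists (q u 0 k0), 0, k0. split; [lra|split; auto; lra]. }
  assert (Q00 : Q vzero 0).
  { exists 0, k0. split; [lra|split; auto]. rewrite q0, vnorm_zero. unfold Rdiv; lra. }
  set (w := vsub x k0).
  set (m := d / (4 * R1 + d)).
  assert (Hm : 0 < m <= 1).
  { unfold m. split. apply Rdiv_lt_0_compat; lra.
    apply (Rmult_le_reg_r (4 * R1 + d)); [lra|]. unfold Rdiv. rewrite Rmult_assoc, Rinv_l by lra. lra. }
  assert (Hm2 : m * (4 * R1 + d) = d) by (unfold m; field; lra).
  assert (Low : forall lam k, 0 <= lam -> K k -> 1 + m <= q w lam k).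
  { intros lam k L Kk. unfold q.
    destruct (Rle_lt_dec lam 1) as [L1 | L1].
    - assert (Kk' : K (vadd (vscal lam k) (vscal (1 - lam) k0))) by (apply Kc; auto; lra).
      replace (vsub w (vscal lam (vsub k k0))) with (vsub x (vadd (vscal lam k) (vscal (1 - lam) k0)))
        by (unfold w; vring).
      pose proof (Kd _ Kk'). assert (d / r = 2) by (unfold r; field; lra).
      assert (d / r <= vnorm (vsub x (vadd (vscal lam k) (vscal (1 - lam) k0))) / r).
      { unfold Rdiv. apply Rmult_le_compat_r; auto. left; apply Rinv_0_lt_compat; auto. }
      lra.
    - set (mu := lam - 1).
      replace (vsub w (vscal lam (vsub k k0))) with (vsub (vsub x k) (vscal mu (vsub k k0)))
        by (unfold w, mu; vring).
      set (N := vnorm (vsub (vsub x k) (vscal mu (vsub k k0)))).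
      assert (HN : d - mu * (2 * R1) <= N).
      { pose proof (vnorm_rev X (vsub x k) (vscal mu (vsub k k0))).
        replace (vsub (vsub x k) (vscal mu (vsub k k0))) with (vsub (vsub x k) (vscal mu (vsub k k0))) in H by auto.
        rewrite vnorm_scal, Rabs_pos_eq in H by (unfold mu; lra).
        pose proof (vnorm_tri3 X k vzero k0). rewrite vnorm_sub0 in H0.
        rewrite (vnorm_sym X vzero k0), vnorm_sub0 in H0.
        pose proof (KR k Kk). pose proof (KR k0 Hk0). pose proof (Kd k Kk).
        assert (mu * vnorm (vsub k k0) <= mu * (2 * R1)) by (apply Rmult_le_compat_l; unfold mu, R1 in *; lra).
        fold N in H. lra. }
      assert (HN0 : 0 <= N) by apply vnorm_ge0.
      destruct (Rle_lt_dec m mu) as [M1 | M1].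
      + assert (0 <= N / r) by (apply rdiv_ge0; lra). unfold mu in *. lra.
      + assert (4 * R1 * mu <= d) by nra.
        assert (N / r >= 2 * (d - mu * (2 * R1)) / d).
        { replace (N / r) with (2 * N / d) by (unfold r; field; lra).
          apply Rle_ge. unfold Rdiv.
          apply Rmult_le_compat_r. left; apply Rinv_0_lt_compat; lra. lra. }
        assert (2 * (d - mu * (2 * R1)) / d >= 1).
        { apply Rle_ge. apply (Rmult_le_reg_r d); [lra|]. unfold Rdiv.
          rewrite Rmult_assoc, Rinv_l by lra. lra. }
        unfold mu in *. lra. }
  set (c0 := 1 + m).
  set (G0 := fun u a => exists t, u = vscal t w /\ a = t * c0).
  assert (HG0 : gvalid X Q G0).
  { split; [|split].
    - intros u a v b [t1 [-> ->]] [t2 [-> ->]]. exists (t1 + t2). split. vring. ring.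
    - intros s u a [t [-> ->]]. exists (s * t). split. vring. ring.
    - intros u a v [t [-> ->]] HQ. destruct (Rle_lt_dec t 0) as [T | T].
      + pose proof (Qge _ _ HQ). unfold c0. nra.
      + pose proof (Qscal _ _ (/ t) ltac:(apply Rinv_0_lt_compat; auto) HQ).
        replace (vscal (/ t) (vscal t w)) with w in H by (vring; field; lra).
        destruct H as [lam [k [L1 [K1 Q1]]]]. pose proof (Low lam k L1 K1).
        assert (c0 <= / t * v) by (unfold c0; lra).
        replace v with (t * (/ t * v)) by (field; lra).
        apply Rmult_le_compat_l; lra. }
  assert (G00 : G0 vzero 0) by (exists 0; split; [vring | ring]).
  destruct (hahn_banach X Q Qadd Qscal Qex Q00 G0 HG0 G00) as [f [Hlin [Hdom HG]]].
  assert (Fw : f w = c0) by (apply HG; exists 1; split; [vring | ring]).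
  assert (Fub : forall u, f u <= vnorm u / r).
  { intro u. rewrite <- q0. apply Hdom. exists 0, k0. split; [lra|split; auto; lra]. }
  assert (Fabs : forall u, Rabs (f u) <= vnorm u / r).
  { intro u. apply Rabs_le. split; [|auto].
    pose proof (Fub (vscal (-1) u)). destruct Hlin as [_ Hs]. rewrite Hs in H.
    rewrite vnorm_scal, Rabs_left in H by lra. lra. }
  assert (FK : forall k, K k -> f k <= 1 + f k0).
  { intros k Kk. assert (f (vsub k k0) <= 1).
    { apply Hdom. exists 1, k. split; [lra|split; auto]. unfold q.
      replace (vsub (vsub k k0) (vscal 1 (vsub k k0))) with (@vzero X) by vring.
      rewrite vnorm_zero. unfold Rdiv; lra. }
    rewrite lin_sub in H by auto. lra. }
  assert (Fx : f x = c0 + f k0).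
  { rewrite <- Fw. unfold w. rewrite lin_sub by auto. ring. }
  exists (fun u => r * f u), (r * (1 + f k0)). split; [|split].
  - destruct Hlin as [H1 H2]. split; [|split].
    + intros u v. rewrite H1. ring.
    + intros a u. rewrite H2. ring.
    + intros u. rewrite Rabs_mult, Rabs_pos_eq by lra. pose proof (Fabs u).
      replace (vnorm u) with (r * (vnorm u / r)) by (field; lra).
      apply Rmult_le_compat_l; lra.
  - intros k Kk. apply Rmult_le_compat_l; [lra | auto].
  - rewrite Fx. unfold c0. nra.
Qed.

End Sep.


Section Hull.
Variable X : BanachSpace.
Implicit Types E : X -> Prop.

Lemma vsum_ext n l l' (p p' : nat -> X) : (forall i, (i < n)%nat -> l i = l' i /\ p i = p' i) ->
  vsum n l p = vsum n l' p'.
Proof.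
  induction n; intros H; simpl; auto. destruct (H n ltac:(lia)) as [-> ->].
  f_equal. apply IHn. intros i Hi. apply H. lia.
Qed.

Lemma vsum_scal n t l (p : nat -> X) : vsum n (fun i => t * l i) p = vscal t (vsum n l p).
Proof. induction n; simpl. vring. rewrite IHn. vring. Qed.

Lemma vsum_app n1 n2 l (p : nat -> X) :
  vsum (n1 + n2) l p = vadd (vsum n1 l p) (vsum n2 (fun j => l (n1 + j)%nat) (fun j => p (n1 + j)%nat)).
Proof.
  induction n2; simpl. rewrite Nat.add_0_r. vring.
  rewrite Nat.add_succ_r. simpl. rewrite IHn2. vring.
Qed.

Lemma rsum_app n1 n2 l :
  rsum (n1 + n2) l = rsum n1 l + rsum n2 (fun j => l (n1 + j)%nat).
Proof.
  induction n2; simpl. rewrite Nat.add_0_r. ring.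
  rewrite Nat.add_succ_r. simpl. rewrite IHn2. ring.
Qed.

Lemma conv_convex E : convex_set X (conv E).
Proof.
  intros z1 z2 t [n1 [l1 [p1 [H1 [S1 ->]]]]] [n2 [l2 [p2 [H2 [S2 ->]]]]] Ht.
  set (l := fun i => if Nat.ltb i n1 then t * l1 i else (1 - t) * l2 (i - n1)%nat).
  set (p := fun i => if Nat.ltb i n1 then p1 i else p2 (i - n1)%nat).
  exists (n1 + n2)%nat, l, p. split; [|split].
  - intros i Hi. unfold l, p. destruct (Nat.ltb_spec i n1).
    + destruct (H1 i H) as [A B]. split; auto. nra.
    + destruct (H2 (i - n1)%nat ltac:(lia)) as [A B]. split; auto. nra.
  - rewrite rsum_app.
    rewrite (rsum_ext n1 l (fun i => t * l1 i)).
    rewrite (rsum_ext n2 _ (fun i => (1 - t) * l2 i)).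
    rewrite !rsum_scal, S1, S2. ring.
    + intros i Hi. unfold l. destruct (Nat.ltb_spec (n1 + i) n1). lia. f_equal. f_equal. lia.
    + intros i Hi. unfold l. destruct (Nat.ltb_spec i n1). auto. lia.
  - rewrite vsum_app.
    rewrite (vsum_ext n1 l (fun i => t * l1 i) p p1).
    rewrite (vsum_ext n2 (fun j => l (n1 + j)%nat) (fun i => (1 - t) * l2 i) (fun j => p (n1 + j)%nat) p2).
    rewrite !vsum_scal. auto.
    + intros i Hi. unfold l, p. destruct (Nat.ltb_spec (n1 + i) n1). lia.
      replace (n1 + i - n1)%nat with i by lia. auto.
    + intros i Hi. unfold l, p. destruct (Nat.ltb_spec i n1). auto. lia.
Qed.

Lemma closure_convex (S : X -> Prop) : convex_set X S -> convex_set X (norm_closure S).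
Proof.
  intros HS y1 y2 t C1 C2 Ht eps He.
  destruct (C1 eps He) as [z1 [Z1 D1]]. destruct (C2 eps He) as [z2 [Z2 D2]].
  exists (vadd (vscal t z1) (vscal (1 - t) z2)). split. apply HS; auto.
  replace (vsub (vadd (vscal t y1) (vscal (1 - t) y2)) (vadd (vscal t z1) (vscal (1 - t) z2)))
    with (vadd (vscal t (vsub y1 z1)) (vscal (1 - t) (vsub y2 z2))) by vring.
  eapply Rle_lt_trans. apply vnorm_triangle. rewrite !vnorm_scal, !Rabs_pos_eq by lra.
  destruct (Req_dec t 0). subst. nra. nra.
Qed.

Lemma closure_closed (S : X -> Prop) x : norm_closure (norm_closure S) x -> norm_closure S x.
Proof.
  intros H eps He. destruct (H (eps/2) ltac:(lra)) as [y [Hy D1]].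
  destruct (Hy (eps/2) ltac:(lra)) as [z [Hz D2]]. exists z. split; auto.
  pose proof (vnorm_tri3 X x y z). lra.
Qed.

Lemma conv_self E x : E x -> conv E x.
Proof.
  intro H. exists 1%nat, (fun _ => 1), (fun _ => x). split; [|split].
  - intros i Hi. split; [lra|auto].
  - simpl. ring.
  - simpl. vring.
Qed.

Lemma closure_self (S : X -> Prop) x : S x -> norm_closure S x.
Proof. intros H eps He. exists x. split; auto. replace (vsub x x) with (@vzero X) by vring. rewrite vnorm_zero. lra. Qed.

Lemma cch_self E x : E x -> cch E x.
Proof. intro. apply closure_self, conv_self; auto. Qed.

Lemma cch_convex E : convex_set X (cch E).
Proof. apply closure_convex, conv_convex. Qed.

Lemma cch_bounded E M : (forall y, E y -> vnorm y <= M) -> forall y, cch E y -> vnorm y <= M.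
Proof.
  intros HM y Hy. apply Rnot_lt_le. intro Hlt.
  destruct (Hy (vnorm y - M) ltac:(lra)) as [z [[n [l [p [H1 [S1 ->]]]]] D]].
  assert (vnorm (vsum n l p) <= M).
  { eapply Rle_trans. apply vsum_norm. intros i Hi; apply H1; auto.
    replace M with (rsum n (fun i => l i * M)) by (rewrite rsum_const, S1; ring).
    apply rsum_le. intros i Hi. destruct (H1 i Hi). apply Rmult_le_compat_l; auto. }
  pose proof (vnorm_rev X y (vsum n l p)). lra.
Qed.

Lemma cch_ub E f c : in_dual_ball f -> (forall y, E y -> f y <= c) -> forall y, cch E y -> f y <= c.
Proof.
  intros Hf HE y Hy. apply Rnot_lt_le. intro Hlt.
  destruct (Hy (f y - c) ltac:(lra)) as [z [[n [l [p [H1 [S1 ->]]]]] D]].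
  assert (f (vsum n l p) <= c).
  { rewrite vsum_lin by (apply dual_linear; auto).
    replace c with (rsum n (fun i => l i * c)) by (rewrite rsum_const, S1; ring).
    apply rsum_le. intros i Hi. destruct (H1 i Hi). apply Rmult_le_compat_l; auto. }
  pose proof (dual_le X f y (vsum n l p) Hf). lra.
Qed.

Lemma cch_dist E x : ~ cch E x -> exists d, 0 < d /\ forall k, cch E k -> d <= vnorm (vsub x k).
Proof.
  intro H. unfold cch, norm_closure in H.
  apply not_all_ex_not in H. destruct H as [eps H].
  apply imply_to_and in H. destruct H as [He H].
  exists (eps / 2). split; [lra|]. intros k Hk.
  destruct (Hk (eps/2) ltac:(lra)) as [y [Hy D]].
  assert (eps <= vnorm (vsub x y)).
  { apply Rnot_lt_le. intro. apply H. exists y; auto. }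
  pose proof (vnorm_tri3 X x k y). lra.
Qed.

Lemma sep_cch E x M : (forall y, E y -> vnorm y <= M) -> ~ cch E x ->
  exists f c, in_dual_ball f /\ (forall k, cch E k -> f k <= c) /\ c < f x.
Proof.
  intros HM Hx. destruct (cch_dist E x Hx) as [d [Hd Hk]].
  apply (separation X (cch E) x M d); auto. apply cch_convex. apply cch_bounded; auto.
Qed.

End Hull.


Section Main.
Variable X : BanachSpace.
Variables (A C : X -> Prop) (MA : R) (a0 : X).
Hypothesis HA : forall y, A y -> vnorm y <= MA.
Hypothesis Ha0 : A a0.
Hypothesis HC : forall x, C x <-> cch A x.

Lemma MA_ge0 : 0 <= MA.
Proof. pose proof (HA a0 Ha0). pose proof (vnorm_ge0 X a0). lra. Qed.

Lemma C_bd y : C y -> vnorm y <= MA.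
Proof. intro H. apply HC in H. eapply cch_bounded; eauto. Qed.

Lemma A_C y : A y -> C y.
Proof. intro. apply HC. apply cch_self; auto. Qed.

Lemma C_diam y y' : C y -> C y' -> vnorm (vsub y y') <= 2 * MA.
Proof.
  intros H H'. pose proof (vnorm_tri3 X y vzero y'). rewrite vnorm_sub0 in H0.
  rewrite (vnorm_sym X vzero y'), vnorm_sub0 in H0. pose proof (C_bd y H). pose proof (C_bd y' H'). lra.
Qed.

Lemma sup_ex f : in_dual_ball f -> exists s,
  is_lub (fun r => exists e, C e /\ r = f e) s /\ is_lub (fun r => exists e, A e /\ r = f e) s.
Proof.
  intro Hf. set (EA := fun r => exists e, A e /\ r = f e).
  assert (Hb : bound EA).
  { exists MA. intros r [e [He ->]]. destruct Hf as [_ [_ H3]]. pose proof (H3 e).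
    pose proof (Rle_abs (f e)). pose proof (HA e He). lra. }
  destruct (completeness EA Hb (ex_intro _ (f a0) (ex_intro _ a0 (conj Ha0 eq_refl)))) as [s [Hs1 Hs2]].
  exists s. split; [split|split; auto].
  - intros r [e [He ->]]. apply HC in He. eapply cch_ub; eauto. intros y Hy. apply Hs1. exists y; auto.
  - intros b Hb'. apply Hs2. intros r [e [He ->]]. apply Hb'. exists e. split; auto. apply A_C; auto.
Qed.

Lemma lub_ub (E : X -> Prop) f s y : is_lub (fun r => exists e, E e /\ r = f e) s -> E y -> f y <= s.
Proof. intros [H _] Hy. apply H. exists y; auto. Qed.

Lemma lub_approx (E : X -> Prop) f s eta : is_lub (fun r => exists e, E e /\ r = f e) s -> 0 < eta ->
  exists y, E y /\ s - eta < f y.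
Proof.
  intros [H1 H2] He. apply NNPP. intro Hn.
  assert (s <= s - eta). { apply H2. intros r [e [Ee ->]]. apply Rnot_lt_le. intro. apply Hn. exists e; auto. }
  lra.
Qed.

Lemma slice_iff (E : X -> Prop) f s delta y : is_lub (fun r => exists e, E e /\ r = f e) s ->
  (slice f E delta y <-> E y /\ f y > s - delta).
Proof.
  intro Hs. split.
  - intros [Hy [s' [Hs' Hf]]]. rewrite (is_lub_u _ _ _ Hs' Hs) in Hf. auto.
  - intros [Hy Hf]. split; auto. exists s. auto.
Qed.

Lemma claim (eps e : R) (g : X -> R) (c' : R) (Bm : X -> Prop) :
  non_dentable eps A -> 0 < e < eps -> diam_le Bm e -> in_dual_ball g ->
  (exists y, C y /\ g y > c') ->
  exists h c'', in_dual_ball h /\ (exists y, C y /\ h y > c'') /\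
    forall y, C y -> h y > c'' -> g y > c' /\ ~ Bm y.
Proof.
  intros ND He HB Hg [y0 [Cy0 Gy0]].
  set (G := fun y => C y /\ (g y <= c' \/ Bm y)).
  assert (Step1 : exists x', C x' /\ ~ cch G x').
  { apply NNPP. intro Hn.
    assert (H : forall x', C x' -> cch G x').
    { intros x' Cx'. apply NNPP. intro. apply Hn. exists x'; auto. }
    destruct (sup_ex g Hg) as [s [HsC HsA]].
    pose proof (lub_ub _ _ _ _ HsC Cy0).
    set (delta := s - c'). assert (Hdel : 0 < delta) by (unfold delta; lra).
    pose proof MA_ge0.
    set (kap := 2 * MA / delta).
    assert (Hkap : 0 <= kap) by (unfold kap; apply rdiv_ge0; lra).
    assert (Hkd : kap * delta = 2 * MA) by (unfold kap; field; lra).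
    assert (Glin : linear_f X g) by (apply dual_linear; auto).
    assert (Pair : forall p p', G p -> G p' -> vnorm (vsub p p') <= e + kap * (s - g p) + kap * (s - g p')).
    { intros p p' [Cp Gp] [Cp' Gp'].
      pose proof (lub_ub _ _ _ _ HsC Cp). pose proof (lub_ub _ _ _ _ HsC Cp').
      pose proof (C_diam p p' Cp Cp').
      assert (0 <= kap * (s - g p)) by nra. assert (0 <= kap * (s - g p')) by nra.
      destruct Gp as [Gp | Gp].
      - assert (kap * delta <= kap * (s - g p)) by (apply Rmult_le_compat_l; unfold delta; lra). lra.
      - destruct Gp' as [Gp' | Gp'].
        + assert (kap * delta <= kap * (s - g p')) by (apply Rmult_le_compat_l; unfold delta; lra). lra.
        + pose proof (HB p p' Gp Gp'). lra. }
    assert (Conv : forall z z', conv G z -> conv G z' ->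
               vnorm (vsub z z') <= e + kap * (s - g z) + kap * (s - g z')).
    { intros z z' [n [l [p [Hl1 [S1 ->]]]]] [n' [l' [p' [Hl1' [S1' ->]]]]].
      assert (Hi : forall i, (i < n)%nat ->
                 vnorm (vsub (p i) (vsum n' l' p')) <= (e + kap * (s - g (p i)) + kap * s) + (- kap) * g (vsum n' l' p')).
      { intros i Hi. apply affine_bound; auto.
        - split; auto. intros j Hj. apply Hl1'; auto.
        - intros j Hj. pose proof (Pair (p i) (p' j) (proj2 (Hl1 i Hi)) (proj2 (Hl1' j Hj))). lra. }
      rewrite vnorm_sym.
      assert (vnorm (vsub (vsum n' l' p') (vsum n l p)) <=
              (e + kap * s - kap * g (vsum n' l' p') + kap * s) + (- kap) * g (vsum n l p)).
      { apply affine_bound; auto.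
        - split; auto. intros j Hj. apply Hl1; auto.
        - intros i Hi'. rewrite vnorm_sym. pose proof (Hi i Hi'). lra. }
      lra. }
    set (tau := (eps - e) / (2 + 4 * kap)).
    assert (Htau : 0 < tau) by (unfold tau; apply Rdiv_lt_0_compat; lra).
    assert (Htau2 : tau * (2 + 4 * kap) = eps - e) by (unfold tau; field; lra).
    apply (ND g tau Hg Htau).
    intros a a' Sa Sa'.
    apply (slice_iff _ _ _ _ _ HsA) in Sa. apply (slice_iff _ _ _ _ _ HsA) in Sa'.
    destruct Sa as [Aa Ga]. destruct Sa' as [Aa' Ga'].
    destruct (H a (A_C a Aa) tau Htau) as [z [Cz Dz]].
    destruct (H a' (A_C a' Aa') tau Htau) as [z' [Cz' Dz']].
    pose proof (Conv z z' Cz Cz').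
    pose proof (dual_le X g a z Hg). pose proof (dual_le X g a' z' Hg).
    pose proof (vnorm_tri3 X a z a'). pose proof (vnorm_tri3 X z z' a').
    rewrite (vnorm_sym X z' a') in H6.
    assert (kap * (s - g z) <= kap * (2 * tau)) by (apply Rmult_le_compat_l; lra).
    assert (kap * (s - g z') <= kap * (2 * tau)) by (apply Rmult_le_compat_l; lra).
    nra. }
  destruct Step1 as [x' [Cx' Nx']].
  assert (GB : forall y, G y -> vnorm y <= MA) by (intros y [Cy _]; apply C_bd; auto).
  destruct (sep_cch X G x' MA GB Nx') as [h [c'' [Hh [Hk Hx]]]].
  exists h, c''. split; auto. split. exists x'; auto.
  intros y Cy Hy. assert (~ G y).
  { intro Gy. pose proof (Hk y (cch_self X G y Gy)). lra. }
  split.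
  - apply Rnot_le_lt. intro. apply H. split; auto.
  - intro. apply H. split; auto.
Qed.

End Main.


Theorem lemma2 (X : BanachSpace) (eps : R) (A : X -> Prop)
  (C S0 D : X -> Prop) (gamma : R) :
  0 < eps ->
  bounded_set A -> nonempty_set A -> non_dentable eps A ->
  (forall x, C x <-> cch A x) ->
  is_slice_of C S0 ->
  (forall x, D x -> C x) ->
  (exists a, is_kuratowski D a /\ a < eps) ->
  0 < gamma < 1 ->
  forall x, C x <->
    cch (fun y => (C y /\ ~ S0 y) \/ (Lambda C S0 D gamma y /\ A y)) x.
Proof.
  intros Heps [MA HA] [a0 Ha0] ND HC _ _ Hkur Hg x.
  set (Bset := fun y => (C y /\ ~ S0 y) \/ (Lambda C S0 D gamma y /\ A y)).
  assert (BC : forall y, Bset y -> C y).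
  { intros y [[Cy _] | [_ Ay]]; auto. apply (A_C X A C HC); auto. }
  assert (BB : forall y, Bset y -> vnorm y <= MA).
  { intros y By. apply (C_bd X A C MA HA HC). auto. }
  split.
  - intro Cx. apply NNPP. intro Hn. fold Bset in Hn.
    destruct (sep_cch X Bset x MA BB Hn) as [f [c [Hf [Hk Hx]]]].
    assert (Hcov : exists e, 0 < e < eps /\ finite_cover_diam D e).
    { destruct Hkur as [a [[K1 K2] Ha]]. apply NNPP. intro Hne.
      assert ((a + eps) / 2 <= a).
      { apply K2. intros e He Hc. apply Rnot_lt_le. intro Hlt. apply Hne. exists e. split; auto. lra. }
      lra. }
    destruct Hcov as [e [He [n [B [HBd HBc]]]]].
    assert (Iter : forall m, (m <= n)%nat -> exists g c', in_dual_ball g /\ (exists y, C y /\ g y > c') /\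
               forall y, C y -> g y > c' -> f y > c /\ forall i, (i < m)%nat -> ~ B i y).
    { induction m as [|m IH]; intro Hm.
      - exists f, c. split; auto. split. exists x; split; auto; lra.
        intros y Cy Fy. split; auto. intros i Hi. lia.
      - destruct (IH ltac:(lia)) as [g [c' [Hg' [Hy Hgy]]]].
        destruct (claim X A C MA a0 HA Ha0 HC eps e g c' (B m) ND He (HBd m ltac:(lia)) Hg' Hy)
          as [h [c'' [Hh [Hy' Hhy]]]].
        exists h, c''. split; auto. split; auto. intros y Cy Hy1.
        destruct (Hhy y Cy Hy1) as [G1 G2]. destruct (Hgy y Cy G1) as [F1 F2].
        split; auto. intros i Hi. destruct (Nat.eq_dec i m). subst; auto. apply F2. lia. }
    destruct (Iter n (le_n n)) as [g [c' [Hg' [[y0 [Cy0 Gy0]] Hgy]]]].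
    destruct (sup_ex X A C MA a0 HA Ha0 HC g Hg') as [s [HsC HsA]].
    pose proof (lub_ub X _ _ _ _ HsC Cy0).
    set (eta := s - c'). assert (Heta : 0 < eta) by (unfold eta; lra).
    destruct (lub_approx X _ _ _ (gamma * eta / 2) HsA ltac:(nra)) as [a [Aa Ga]].
    assert (Ca : C a) by (apply (A_C X A C HC); auto).
    assert (La : Lambda C S0 D gamma a).
    { exists g, eta. split; auto. split; auto. split.
      - intros y Sy. apply (slice_iff X _ _ _ _ _ HsC) in Sy. destruct Sy as [Cy Gy].
        destruct (Hgy y Cy ltac:(unfold eta in Gy; lra)) as [F1 F2]. split.
        + apply NNPP. intro NS. assert (Bset y) by (left; auto).
          pose proof (Hk y (cch_self X Bset y H0)). lra.
        + intro Dy. destruct (HBc y Dy) as [i [Hi Bi]]. apply (F2 i Hi Bi).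
      - apply (slice_iff X _ _ _ _ _ HsC). split; auto. }
    assert (Bset a) by (right; auto).
    pose proof (Hk a (cch_self X Bset a H0)).
    assert (g a > c') by (unfold eta in Ga; nra).
    destruct (Hgy a Ca H2). lra.
  - intro Hx. apply HC. apply NNPP. intro Hn.
    destruct (sep_cch X A x MA HA Hn) as [f [c [Hf [Hk Hfx]]]].
    assert (f x <= c).
    { apply (cch_ub X Bset f c Hf); auto. intros y By. apply Hk. apply HC. auto. }
    lra.
Qed.
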